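(* Let $d\ge2$, let $A,B$ be $d$-dimensional systems, let $\Phi=|\phi\rangle\langle\phi|$ with $|\phi\rangle=\frac1{\sqrt d}\sum_{i=1}^d|i\rangle_A|i\rangle_B$, and for $0\le\lambda\le1$ let $\rho_{AB}=\lambda\Phi+\frac{1-\lambda}{d^2-1}(\mathbb I-\Phi)$ (an isotropic state). Then $$Q^A_{\mathcal N}(\rho_{AB})=Q^{AB}_{\mathcal N}(\rho_{AB})=\frac{|\lambda d^2-1|}{2(d+1)}.$$
   Context: The negativity of a bipartite state $\tau_{X:Y}$ is $\mathcal N_{X:Y}(\tau)=(\|\tau^\Gamma\|_1-1)/2$ with $\tau^\Gamma$ the partial transpose on one party and $\|\cdot\|_1$ the trace norm. For a system $S$ of dimension $m$ with orthonormal basis $\{|s_k\rangle\}$, the measurement interaction is the isometry $V_S:S\to S\otimes S'$ ($S'$ $m$-dimensional with computational basis $\{|k\rangle\}$), $V_S|s_k\rangle=|s_k\rangle|k\rangle$. One-sided negativity of quantumness: $Q^A_{\mathcal N}(\rho_{AB})=\min\mathcal N_{AB:A'}\big((V_A\otimes\mathbb I_B)\rho_{AB}(V_A\otimes\mathbb I_B)^\dagger\big)$ over orthonormal bases of $A$. Two-sided: $Q^{AB}_{\mathcal N}(\rho_{AB})=\min\mathcal N_{AB:A'B'}\big((V_A\otimes V_B)\rho_{AB}(V_A\otimes V_B)^\dagger\big)$ over orthonormal bases of $A$ and $B$. *)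

(* Defs.v *)
From HB Require Import structures.
From mathcomp Require Import all_boot all_order all_algebra.
From mathcomp Require Import mxtens complex.
From mathcomp Require Import reals.

Set Implicit Arguments.
Unset Strict Implicit.
Unset Printing Implicit Defensive.

Import Order.TTheory GRing.Theory Num.Theory.
Local Open Scope ring_scope.

Section QuantumDefs.
Variable C : numClosedFieldType.

Definition adjmx m n (M : 'M[C]_(m, n)) : 'M[C]_(n, m) := (map_mx Num.conj M)^T.

Definition ket d (k : 'I_d) : 'cV[C]_d := delta_mx k 0.

Definition poly_roots (p : {poly C}) : seq C := sval (closed_field_poly_normal p).

(* trace norm: sum of the singular values, i.e. of the square roots of the
   eigenvalues (with algebraic multiplicity) of M^dagger M *)
Definition trnorm n (M : 'M[C]_n) : C :=
  \sum_(z <- poly_roots (char_poly (adjmx M *m M))) sqrtC z.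

Definition orthonormal m (s : 'I_m -> 'cV[C]_m) : Prop :=
  forall j k, adjmx (s j) *m s k = (j == k)%:R%:M.

(* measurement isometry V_S : S -> S (x) S',  V_S |s_k> = |s_k>|k> *)
Definition measV m (s : 'I_m -> 'cV[C]_m) : 'M[C]_(m * m, m) :=
  \sum_(k < m) (s k *t ket k) *m adjmx (s k).

(* one-sided: state on (A (x) A') (x) B ; partial transpose on A' (middle) *)
Definition ptrans_mid a b c (M : 'M[C]_((a * b) * c)) : 'M[C]_((a * b) * c) :=
  \matrix_(i, j)
    let: (i1, ib) := mxtens_unindex i in let: (ia, ix) := mxtens_unindex i1 in
    let: (j1, jb) := mxtens_unindex j in let: (ja, jx) := mxtens_unindex j1 in
    M (mxtens_index (mxtens_index (ia, jx), ib))
      (mxtens_index (mxtens_index (ja, ix), jb)).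

(* two-sided: state on (A (x) A') (x) (B (x) B') ; partial transpose on A'B' *)
Definition ptrans_24 a b c e (M : 'M[C]_((a * b) * (c * e))) : 'M[C]_((a * b) * (c * e)) :=
  \matrix_(i, j)
    let: (i1, i2) := mxtens_unindex i in
    let: (ia, ix) := mxtens_unindex i1 in let: (ib, iy) := mxtens_unindex i2 in
    let: (j1, j2) := mxtens_unindex j in
    let: (ja, jx) := mxtens_unindex j1 in let: (jb, jy) := mxtens_unindex j2 in
    M (mxtens_index (mxtens_index (ia, jx), mxtens_index (ib, jy)))
      (mxtens_index (mxtens_index (ja, ix), mxtens_index (jb, iy))).

Definition negA d (s : 'I_d -> 'cV[C]_d) (rho : 'M[C]_(d * d)) : C :=
  let W := measV s *t (1%:M : 'M[C]_d) in
  (trnorm (ptrans_mid (W *m rho *m adjmx W)) - 1) / 2.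

Definition negAB d (sA sB : 'I_d -> 'cV[C]_d) (rho : 'M[C]_(d * d)) : C :=
  let W := measV sA *t measV sB in
  (trnorm (ptrans_24 (W *m rho *m adjmx W)) - 1) / 2.

Definition is_min T (P : T -> Prop) (f : T -> C) (q : C) : Prop :=
  (exists2 x, P x & f x = q) /\ (forall x, P x -> q <= f x).

Definition is_QA d (rho : 'M[C]_(d * d)) (q : C) : Prop :=
  is_min (@orthonormal d) (fun s => negA s rho) q.

Definition is_QAB d (rho : 'M[C]_(d * d)) (q : C) : Prop :=
  is_min (fun s : ('I_d -> 'cV[C]_d) * ('I_d -> 'cV[C]_d) =>
            orthonormal s.1 /\ orthonormal s.2)
         (fun s => negAB s.1 s.2 rho) q.

Definition max_ent d : 'M[C]_(d * d, 1 * 1) :=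
  (sqrtC d%:R)^-1 *: \sum_(i < d) (ket i *t ket i).

Definition Phi d : 'M[C]_(d * d) := max_ent d *m adjmx (max_ent d).

Definition isotropic d (lam : C) : 'M[C]_(d * d) :=
  lam *: Phi d + ((1 - lam) / (d ^ 2 - 1)%:R) *: (1%:M - Phi d).

End QuantumDefs.

(* Main.v *)
Require Import Defs.
From HB Require Import structures.
From mathcomp Require Import all_boot all_order all_algebra.
From mathcomp Require Import mxtens complex.
From mathcomp Require Import reals.
From mathcomp Require Import ring.
Import Order.TTheory GRing.Theory Num.Theory.
Local Open Scope ring_scope.

Set Implicit Arguments.
Unset Strict Implicit.
Unset Printing Implicit Defensive.


Section Basics.
Variable C : numClosedFieldType.

Lemma adjmxE m n (M : 'M[C]_(m, n)) i j : adjmx M i j = (M j i)^*.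
Proof. by rewrite !mxE. Qed.

Lemma adjmxK m n (M : 'M[C]_(m, n)) : adjmx (adjmx M) = M.
Proof. by apply/matrixP=> i j; rewrite !mxE conjCK. Qed.

Lemma adjmx_mul m n p (A : 'M[C]_(m, n)) (B : 'M[C]_(n, p)) :
  adjmx (A *m B) = adjmx B *m adjmx A.
Proof.
apply/matrixP=> i j; rewrite !mxE rmorph_sum; apply: eq_bigr=> k _.
by rewrite !mxE rmorphM mulrC.
Qed.

Lemma adjmxD m n (A B : 'M[C]_(m, n)) : adjmx (A + B) = adjmx A + adjmx B.
Proof. by apply/matrixP=> i j; rewrite !mxE rmorphD. Qed.

Lemma adjmxZ m n a (A : 'M[C]_(m, n)) : adjmx (a *: A) = a^* *: adjmx A.
Proof. by apply/matrixP=> i j; rewrite !mxE rmorphM. Qed.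

Lemma adjmx1 n : adjmx (1%:M : 'M[C]_n) = 1%:M.
Proof. by apply/matrixP=> i j; rewrite !mxE conjC_nat eq_sym. Qed.

Lemma adjmx_sum m n I (r : seq I) (P : pred I) (F : I -> 'M[C]_(m, n)) :
  adjmx (\sum_(i <- r | P i) F i) = \sum_(i <- r | P i) adjmx (F i).
Proof.
apply/matrixP=> i j; rewrite !mxE !summxE rmorph_sum; apply: eq_bigr=> k _.
by rewrite !mxE.
Qed.

Lemma adjmx_tens m n p q (A : 'M[C]_(m, n)) (B : 'M[C]_(p, q)) :
  adjmx (A *t B) = adjmx A *t adjmx B.
Proof. by rewrite /adjmx map_mxT trmx_tens. Qed.

Lemma sum_tens m n (F : 'I_(m * n) -> C) :
  \sum_k F k = \sum_i \sum_j F (mxtens_index (i, j)).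
Proof.
rewrite pair_big /=; apply: reindex=> /=.
by exists (@mxtens_unindex m n)=> k _; rewrite (mxtens_indexK, mxtens_unindexK) //; case: k.
Qed.

Lemma sum_delta n (i : 'I_n) (f : 'I_n -> C) :
  \sum_j ((i == j)%:R * f j) = f i.
Proof.
rewrite (bigD1 i) //= eqxx mul1r big1 ?addr0 // => j /negbTE.
by rewrite eq_sym => ->; rewrite mul0r.
Qed.

Lemma sum_delta' n (i : 'I_n) (f : 'I_n -> C) :
  \sum_j ((j == i)%:R * f j) = f i.
Proof. by rewrite -(sum_delta i f); apply: eq_bigr=> j _; rewrite eq_sym. Qed.

Lemma tens1 m n : (1%:M : 'M[C]_m) *t (1%:M : 'M[C]_n) = 1%:M.
Proof.
apply/matrixP=> i j.
case: (mxtens_indexP i)=> i1 i2; case: (mxtens_indexP j)=> j1 j2.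
rewrite tensmxE !mxE -natrM (inj_eq (can_inj (@mxtens_indexK m n))) xpair_eqE.
by rewrite mulnb.
Qed.

End Basics.


Section Spec.
Variable C : numClosedFieldType.

Lemma char_poly_sim n (U V A : 'M[C]_n) : V *m U = 1%:M ->
  char_poly (U *m A *m V) = char_poly A.
Proof.
move=> VU; have UV := mulmx1C VU.
have e : char_poly_mx (U *m A *m V) = map_mx (@polyC C) U *m char_poly_mx A *m map_mx (@polyC C) V.
  rewrite /char_poly_mx mulmxBr mulmxBl !map_mxM; congr (_ - _).
  by rewrite scalar_mxC -mulmxA -map_mxM UV map_mx1 mulmx1.
rewrite /char_poly e !det_mulmx mulrC mulrA -det_mulmx -map_mxM VU map_mx1.
by rewrite det1 mul1r.
Qed.

Lemma trnorm_unitary n (U M : 'M[C]_n) : adjmx U *m U = 1%:M ->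
  trnorm (U *m M *m adjmx U) = trnorm M.
Proof.
move=> UU; have UU' := mulmx1C UU.
rewrite /trnorm; congr (\sum_(z <- poly_roots _) _).
rewrite !adjmx_mul adjmxK.
have -> : U *m (adjmx M *m adjmx U) *m (U *m M *m adjmx U) =
   U *m (adjmx M *m M) *m adjmx U.
  by rewrite !mulmxA -[_ *m adjmx U *m U]mulmxA UU mulmx1.
by rewrite char_poly_sim.
Qed.

Lemma poly_roots_prod n (c : 'I_n -> C) :
  perm_eq (poly_roots (\prod_(i < n) ('X - (c i)%:P))) [seq c i | i <- index_enum 'I_n].
Proof.
rewrite /poly_roots; case: (closed_field_poly_normal _) => r /= Hr.
have /monicP hm : \prod_(i < n) ('X - (c i)%:P) \is monic by apply: monic_prod_XsubC.
rewrite hm scale1r in Hr.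
by apply: prod_XsubC_eq; rewrite big_map -Hr.
Qed.

Lemma trnorm_diag n (M : 'M[C]_n) (r : 'rV[C]_n) : adjmx M *m M = diag_mx r ->
  trnorm M = \sum_i sqrtC (r 0 i).
Proof.
move=> e; rewrite /trnorm e char_poly_trig ?diag_mx_is_trig //.
rewrite (perm_big _ (poly_roots_prod _)) big_map; apply: eq_bigr=> i _.
by rewrite mxE eqxx mulr1n.
Qed.

Lemma trnorm_sparse n (M : 'M[C]_n) :
  (forall i j k, j != k -> M i j * M i k = 0) ->
  (forall j i k, i != k -> M i j * M k j = 0) ->
  trnorm M = \sum_j \sum_i `|M i j|.
Proof.
move=> hr hc.
rewrite (@trnorm_diag _ _ (\row_j \sum_i `|M i j| ^+ 2)).
  apply: eq_bigr=> j _; rewrite mxE.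
  case: (pickP (fun i => M i j != 0)) => [i0 /= Hi0|H0].
    rewrite (bigD1 i0) //= big1 ?addr0; last first.
      move=> i /negbTE ne; have := hc j i0 i; rewrite eq_sym ne => /(_ isT) /eqP.
      by rewrite mulf_eq0 (negbTE Hi0) /= => /eqP->; rewrite normr0 expr0n.
    rewrite (bigD1 i0) //= big1 ?addr0 ?sqrCK //.
    move=> i /negbTE ne; have := hc j i0 i; rewrite eq_sym ne => /(_ isT) /eqP.
    by rewrite mulf_eq0 (negbTE Hi0) /= => /eqP->; rewrite normr0.
  rewrite !big1 ?sqrtC0 // => i _; have := H0 i; rewrite /= => /negbFE /eqP->;
    by rewrite normr0 ?expr0n.
apply/matrixP=> j k; rewrite !mxE.
case: (eqVneq j k) => [<-|ne].
  rewrite mulr1n; apply: eq_bigr=> i _; rewrite !mxE normCK mulrC.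
  done.
rewrite mulr0n big1 // => i _; rewrite !mxE.
have /eqP := hr i j k ne; rewrite mulf_eq0 => /orP[] /eqP->.
  by rewrite conjC0 mul0r.
by rewrite mulr0.
Qed.

End Spec.


Notation ix2 i j := (@mxtens_index _ _ (i, j)).

Section Local.
Variable C : numClosedFieldType.

Lemma sumF3 a b c (A : 'M[C]_a) (B : 'M[C]_c) ia (ix : 'I_b) ib (f : 'I_(a * b * c) -> C) :
  \sum_p ((A *t (1%:M : 'M_b)) *t B) (ix2 (ix2 ia ix) ib) p * f p =
  \sum_pa \sum_pb A ia pa * B ib pb * f (ix2 (ix2 pa ix) pb).
Proof.
rewrite sum_tens sum_tens; apply: eq_bigr=> pa _.
rewrite exchange_big /=; apply: eq_bigr=> pb _.
under eq_bigr do rewrite !tensmxE mxE.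
rewrite (bigD1 ix) //= eqxx mulr1 big1 ?addr0 //.
by move=> px; rewrite eq_sym => /negbTE ->; rewrite mulr0 !mul0r.
Qed.

Lemma sumF3' a b c (A : 'M[C]_a) (B : 'M[C]_c) ja (jx : 'I_b) jb (f : 'I_(a * b * c) -> C) :
  \sum_q f q * adjmx ((A *t (1%:M : 'M_b)) *t B) q (ix2 (ix2 ja jx) jb) =
  \sum_qa \sum_qb f (ix2 (ix2 qa jx) qb) * (A ja qa * B jb qb)^*.
Proof.
rewrite sum_tens sum_tens; apply: eq_bigr=> pa _.
rewrite exchange_big /=; apply: eq_bigr=> pb _.
under eq_bigr do rewrite adjmxE !tensmxE [1%:M _ _]mxE.
rewrite (bigD1 jx) //= eqxx mulr1 big1 ?addr0 //.
move=> px; rewrite eq_sym => /negbTE ->.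
by rewrite mulr0 mul0r rmorph0 mulr0.
Qed.

Lemma ptrans_midE a b c (M : 'M[C]_(a * b * c)) ia ix ib ja jx jb :
  ptrans_mid M (ix2 (ix2 ia ix) ib) (ix2 (ix2 ja jx) jb) =
  M (ix2 (ix2 ia jx) ib) (ix2 (ix2 ja ix) jb).
Proof. by rewrite mxE !mxtens_indexK. Qed.

Lemma ptrans_24E a b c e (M : 'M[C]_(a * b * (c * e))) ia ix ib iy ja jx jb jy :
  ptrans_24 M (ix2 (ix2 ia ix) (ix2 ib iy)) (ix2 (ix2 ja jx) (ix2 jb jy)) =
  M (ix2 (ix2 ia jx) (ix2 ib jy)) (ix2 (ix2 ja ix) (ix2 jb iy)).
Proof. by rewrite mxE !mxtens_indexK. Qed.

Lemma ptrans_mid_local a b c (A A' : 'M[C]_a) (B B' : 'M[C]_c)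
    (Y : 'M[C]_(a * b * c)) :
  let F := (A *t (1%:M : 'M_b)) *t B in
  let G := (A' *t (1%:M : 'M_b)) *t B' in
  ptrans_mid (F *m Y *m adjmx G) = F *m ptrans_mid Y *m adjmx G.
Proof.
move=> F G.
have E : forall (Z : 'M[C]_(a * b * c)) ia ix ib ja jx jb,
  (F *m Z *m adjmx G) (ix2 (ix2 ia ix) ib) (ix2 (ix2 ja jx) jb) =
  \sum_pa \sum_pb \sum_qa \sum_qb (A ia pa * B ib pb *
     Z (ix2 (ix2 pa ix) pb) (ix2 (ix2 qa jx) qb) * (A' ja qa * B' jb qb)^*).
  move=> Z ia ix ib ja jx jb.
  rewrite mxE.
  under eq_bigr do rewrite mxE sumF3 mulr_suml.
  rewrite exchange_big /=; apply: eq_bigr=> pa _.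
  under eq_bigr do rewrite mulr_suml.
  rewrite exchange_big /=; apply: eq_bigr=> pb _.
  rewrite (sumF3' A' B' ja jx jb (fun q => A ia pa * B ib pb * Z (ix2 (ix2 pa ix) pb) q)).
  by [].
apply/matrixP=> i j.
case: (mxtens_indexP i)=> i1 ib; case: (mxtens_indexP i1)=> ia ix.
case: (mxtens_indexP j)=> j1 jb; case: (mxtens_indexP j1)=> ja jx.
rewrite ptrans_midE E E.
do 4! (apply: eq_bigr => ? _).
by rewrite ptrans_midE.
Qed.


Lemma sumF4 a b c e (A : 'M[C]_a) (B : 'M[C]_c) ia (ix : 'I_b) ib (iy : 'I_e)
  (f : 'I_(a * b * (c * e)) -> C) :
  \sum_p ((A *t (1%:M : 'M_b)) *t (B *t (1%:M : 'M_e))) (ix2 (ix2 ia ix) (ix2 ib iy)) p * f p =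
  \sum_pa \sum_pb A ia pa * B ib pb * f (ix2 (ix2 pa ix) (ix2 pb iy)).
Proof.
rewrite sum_tens sum_tens; apply: eq_bigr=> pa _.
rewrite (bigD1 ix) //= [X in _ + X]big1 ?addr0; last first.
  move=> px ne; rewrite big1 // => p2 _; rewrite !tensmxE [1%:M _ px]mxE.
  by rewrite eq_sym (negbTE ne) !(mulr0, mul0r).
rewrite sum_tens; apply: eq_bigr=> pb _.
rewrite (bigD1 iy) //= [X in _ + X]big1 ?addr0; last first.
  move=> py ne; rewrite !tensmxE [1%:M _ py]mxE.
  by rewrite eq_sym (negbTE ne) !(mulr0, mul0r).
by rewrite !tensmxE !mxE !eqxx !mulr1.
Qed.

Lemma sumF4' a b c e (A : 'M[C]_a) (B : 'M[C]_c) ja (jx : 'I_b) jb (jy : 'I_e)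
  (f : 'I_(a * b * (c * e)) -> C) :
  \sum_q f q * adjmx ((A *t (1%:M : 'M_b)) *t (B *t (1%:M : 'M_e))) q (ix2 (ix2 ja jx) (ix2 jb jy)) =
  \sum_qa \sum_qb f (ix2 (ix2 qa jx) (ix2 qb jy)) * (A ja qa * B jb qb)^*.
Proof.
rewrite sum_tens sum_tens; apply: eq_bigr=> pa _.
rewrite (bigD1 jx) //= [X in _ + X]big1 ?addr0; last first.
  move=> px ne; rewrite big1 // => p2 _; rewrite adjmxE !tensmxE [1%:M _ px]mxE.
  by rewrite eq_sym (negbTE ne) !(mulr0, mul0r, rmorph0).
rewrite sum_tens; apply: eq_bigr=> pb _.
rewrite (bigD1 jy) //= [X in _ + X]big1 ?addr0; last first.
  move=> py ne; rewrite adjmxE !tensmxE [1%:M _ py]mxE.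
  by rewrite eq_sym (negbTE ne) !(mulr0, mul0r, rmorph0).
by rewrite adjmxE !tensmxE !mxE !eqxx !mulr1.
Qed.

Lemma ptrans_24_local a b c e (A A' : 'M[C]_a) (B B' : 'M[C]_c)
    (Y : 'M[C]_(a * b * (c * e))) :
  let F := (A *t (1%:M : 'M_b)) *t (B *t (1%:M : 'M_e)) in
  let G := (A' *t (1%:M : 'M_b)) *t (B' *t (1%:M : 'M_e)) in
  ptrans_24 (F *m Y *m adjmx G) = F *m ptrans_24 Y *m adjmx G.
Proof.
move=> F G.
have E : forall (Z : 'M[C]_(a * b * (c * e))) ia ix ib iy ja jx jb jy,
  (F *m Z *m adjmx G) (ix2 (ix2 ia ix) (ix2 ib iy)) (ix2 (ix2 ja jx) (ix2 jb jy)) =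
  \sum_pa \sum_pb \sum_qa \sum_qb (A ia pa * B ib pb *
     Z (ix2 (ix2 pa ix) (ix2 pb iy)) (ix2 (ix2 qa jx) (ix2 qb jy)) * (A' ja qa * B' jb qb)^*).
  move=> Z ia ix ib iy ja jx jb jy.
  rewrite mxE.
  under eq_bigr do rewrite mxE sumF4 mulr_suml.
  rewrite exchange_big /=; apply: eq_bigr=> pa _.
  under eq_bigr do rewrite mulr_suml.
  rewrite exchange_big /=; apply: eq_bigr=> pb _.
  by rewrite (sumF4' A' B' ja jx jb jy (fun q => A ia pa * B ib pb * Z (ix2 (ix2 pa ix) (ix2 pb iy)) q)).
apply/matrixP=> i j.
case: (mxtens_indexP i)=> i1 i2; case: (mxtens_indexP i1)=> ia ix.
case: (mxtens_indexP i2)=> ib iy.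
case: (mxtens_indexP j)=> j1 j2; case: (mxtens_indexP j1)=> ja jx.
case: (mxtens_indexP j2)=> jb jy.
rewrite ptrans_24E E E.
do 4! (apply: eq_bigr => ? _).
by rewrite ptrans_24E.
Qed.

End Local.


Section Decomp.
Variable C : numClosedFieldType.
Variable d : nat.

Definition Smx (s : 'I_d -> 'cV[C]_d) : 'M[C]_d := \matrix_(i, k) s k i 0.

Lemma mul_ket m (M : 'M[C]_(m, d)) k i : (M *m ket C k) i 0 = M i k.
Proof. by rewrite -colE mxE. Qed.

Lemma ketE (k : 'I_d) i : ket C k i 0 = (i == k)%:R.
Proof. by rewrite mxE andbT. Qed.

Lemma Smx_ket s k : Smx s *m ket C k = s k.
Proof. by apply/matrixP=> i j; rewrite ord1 mul_ket mxE. Qed.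

Lemma Smx_unitary s : Defs.orthonormal s -> adjmx (Smx s) *m Smx s = 1%:M.
Proof.
move=> hs; apply/matrixP=> j k; have := hs j k.
move/matrixP/(_ 0 0); rewrite !mxE eqxx mulr1n => <-.
by apply: eq_bigr=> i _; rewrite !mxE.
Qed.

Definition V0 : 'M[C]_(d * d, d) := measV (@ket C d).

Lemma measV_decomp s : measV s = (Smx s *t (1%:M : 'M_d)) *m V0 *m adjmx (Smx s).
Proof.
rewrite /V0 /measV mulmx_sumr mulmx_suml; apply: eq_bigr=> k _.
by rewrite !mulmxA tensmx_mul mul1mx Smx_ket -mulmxA -adjmx_mul Smx_ket.
Qed.

Lemma V0E a b c : V0 (ix2 a b) c = (a == c)%:R * (b == c)%:R.
Proof.
rewrite /V0 /measV summxE.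
rewrite (bigD1 c) //= big1 ?addr0; last first.
  move=> k ne; rewrite mxE big1 // => z _.
  rewrite adjmxE [in X in _ * X^*]mxE eq_sym (negbTE ne) rmorph0 mulr0 //.
rewrite mxE (bigD1 0) //= big1 ?addr0; last first.
  by move=> z; have -> : z = 0 by apply: val_inj; case: z => [[]].
rewrite adjmxE [in X in _ * X^*]mxE !eqxx rmorph1 mulr1.
have -> : (0 : 'I_(1 * 1)) = ix2 0 0 by apply: val_inj.
by rewrite tensmxE !ketE.
Qed.

Lemma sumV1 (a b : 'I_d) n (m : 'I_n) (f : 'I_(d * n) -> C) :
  \sum_p (V0 *t (1%:M : 'M_n)) (ix2 (ix2 a b) m) p * f p = (a == b)%:R * f (ix2 a m).
Proof.
rewrite sum_tens (bigD1 a) //= [X in _ + X]big1 ?addr0; last first.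
  move=> c ne; rewrite big1 // => z _; rewrite tensmxE V0E eq_sym (negbTE ne).
  by rewrite !mul0r.
rewrite (bigD1 m) //= [X in _ + X]big1 ?addr0; last first.
  by move=> z ne; rewrite tensmxE mxE eq_sym (negbTE ne) mulr0 mul0r.
by rewrite tensmxE V0E mxE !eqxx mulr1 mul1r eq_sym.
Qed.

Lemma sumV1' (a b : 'I_d) n (m : 'I_n) (f : 'I_(d * n) -> C) :
  \sum_q f q * adjmx (V0 *t (1%:M : 'M_n)) q (ix2 (ix2 a b) m) = (a == b)%:R * f (ix2 a m).
Proof.
rewrite -sumV1; apply: eq_bigr=> q _; rewrite adjmxE mulrC; congr (_ * _).
case: (mxtens_indexP q)=> c z; rewrite tensmxE V0E mxE.
by rewrite !rmorphM !rmorph_nat.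
Qed.

Lemma sumV2 (a b m n : 'I_d) (f : 'I_(d * d) -> C) :
  \sum_p (V0 *t V0) (ix2 (ix2 a b) (ix2 m n)) p * f p =
  (a == b)%:R * (m == n)%:R * f (ix2 a m).
Proof.
rewrite sum_tens (bigD1 a) //= [X in _ + X]big1 ?addr0; last first.
  move=> c ne; rewrite big1 // => z _; rewrite tensmxE V0E eq_sym (negbTE ne).
  by rewrite !mul0r.
rewrite (bigD1 m) //= [X in _ + X]big1 ?addr0; last first.
  by move=> z ne; rewrite tensmxE [V0 _ z]V0E eq_sym (negbTE ne) !(mulr0, mul0r).
rewrite tensmxE !V0E !eqxx.
by rewrite !mul1r [b == a]eq_sym [n == m]eq_sym.
Qed.

Lemma sumV2' (a b m n : 'I_d) (f : 'I_(d * d) -> C) :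
  \sum_q f q * adjmx (V0 *t V0) q (ix2 (ix2 a b) (ix2 m n)) =
  (a == b)%:R * (m == n)%:R * f (ix2 a m).
Proof.
rewrite -sumV2; apply: eq_bigr=> q _; rewrite adjmxE mulrC; congr (_ * _).
case: (mxtens_indexP q)=> c z; rewrite tensmxE !V0E.
by rewrite !rmorphM !rmorph_nat.
Qed.

Lemma Y1E (Z : 'M[C]_(d * d)) a b m a' b' m' :
  let P := V0 *t (1%:M : 'M_d) in
  (P *m Z *m adjmx P) (ix2 (ix2 a b) m) (ix2 (ix2 a' b') m') =
  (a == b)%:R * (a' == b')%:R * Z (ix2 a m) (ix2 a' m').
Proof.
move=> P; rewrite mxE.
under eq_bigr do rewrite mxE sumV1.
rewrite (sumV1' a' b' m' (fun q => (a == b)%:R * Z (ix2 a m) q)) /=.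
by rewrite mulrA [X in X * _]mulrC.
Qed.

Lemma Y2E (Z : 'M[C]_(d * d)) a b m n a' b' m' n' :
  let P := V0 *t V0 in
  (P *m Z *m adjmx P) (ix2 (ix2 a b) (ix2 m n)) (ix2 (ix2 a' b') (ix2 m' n')) =
  (a == b)%:R * (m == n)%:R * ((a' == b')%:R * (m' == n')%:R) * Z (ix2 a m) (ix2 a' m').
Proof.
move=> P; rewrite mxE.
under eq_bigr do rewrite mxE sumV2.
rewrite (sumV2' a' b' m' n' (fun q => (a == b)%:R * (m == n)%:R * Z (ix2 a m) q)) /=.
by rewrite mulrA [X in X * _]mulrC.
Qed.

End Decomp.


Section Reduce.
Variable C : numClosedFieldType.
Variable d : nat.

Lemma tens_mul3 m1 n1 p1 q1 m2 n2 p2 q2 (X : 'M[C]_(m1, n1)) (Y : 'M[C]_(n1, p1)) (Z : 'M[C]_(p1, q1))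
  (X' : 'M[C]_(m2, n2)) (Y' : 'M[C]_(n2, p2)) (Z' : 'M[C]_(p2, q2)) :
  (X *m Y *m Z) *t (X' *m Y' *m Z') = (X *t X') *m (Y *t Y') *m (Z *t Z').
Proof. by rewrite !tensmx_mul. Qed.

Lemma conj_unitary (S : 'M[C]_d) : adjmx S *m S = 1%:M ->
  adjmx (map_mx Num.conj S) *m map_mx Num.conj S = 1%:M.
Proof.
move=> hS; apply/matrixP=> j k; have /matrixP/(_ j k) := hS.
rewrite !mxE => e; rewrite -[X in _ = X]conjC_nat -e rmorph_sum.
apply: eq_bigr=> i _; rewrite !mxE.
rewrite conjCK (rmorphM Num.conj); congr (_ * _); exact: (esym (conjCK _)).
Qed.

Lemma unitary_tens (A : 'M[C]_d) (B : 'M[C]_d) :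
  adjmx A *m A = 1%:M -> adjmx B *m B = 1%:M ->
  adjmx (A *t B) *m (A *t B) = 1%:M.
Proof. by move=> hA hB; rewrite adjmx_tens tensmx_mul hA hB tens1. Qed.

Lemma unitary_F (A : 'M[C]_d) (B : 'M[C]_d) :
  adjmx A *m A = 1%:M -> adjmx B *m B = 1%:M ->
  adjmx ((A *t (1%:M : 'M_d)) *t B) *m ((A *t (1%:M : 'M_d)) *t B) = 1%:M.
Proof.
move=> hA hB; rewrite !adjmx_tens !tensmx_mul hA hB adjmx1 mulmx1 !tens1 //.
Qed.

Lemma unitary_F2 (A : 'M[C]_d) (B : 'M[C]_d) :
  adjmx A *m A = 1%:M -> adjmx B *m B = 1%:M ->
  adjmx ((A *t (1%:M : 'M_d)) *t (B *t (1%:M : 'M_d))) *m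
    ((A *t (1%:M : 'M_d)) *t (B *t (1%:M : 'M_d))) = 1%:M.
Proof.
move=> hA hB; rewrite !adjmx_tens !tensmx_mul hA hB adjmx1 mulmx1 !tens1 //.
Qed.

Lemma negA_reduce (s : 'I_d -> 'cV[C]_d) (rho : 'M[C]_(d * d)) :
  Defs.orthonormal s ->
  let S := Smx s in let G := S *t map_mx Num.conj S in
  let P := V0 C d *t (1%:M : 'M_d) in
  negA s rho = (trnorm (ptrans_mid (P *m (adjmx G *m rho *m G) *m adjmx P)) - 1) / 2.
Proof.
move=> hs S G P.
have hS : adjmx S *m S = 1%:M by apply: Smx_unitary.
set T := map_mx Num.conj S.
have hT : adjmx T *m T = 1%:M by apply: conj_unitary.
have hT' := mulmx1C hT.
set F := (S *t (1%:M : 'M_d)) *t T.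
have hW : measV s *t (1%:M : 'M_d) = F *m P *m adjmx G.
  have e1 : (1%:M : 'M_d) = T *m 1%:M *m adjmx T by rewrite mulmx1.
  rewrite measV_decomp [X in _ *t X]e1 tens_mul3.
  by rewrite /G adjmx_tens.
rewrite /negA hW !adjmx_mul adjmxK.
have -> : F *m P *m adjmx G *m rho *m (G *m (adjmx P *m adjmx F)) =
  F *m (P *m (adjmx G *m rho *m G) *m adjmx P) *m adjmx F.
  by rewrite !mulmxA.
by rewrite ptrans_mid_local trnorm_unitary // unitary_F.
Qed.

Lemma negAB_reduce (sA sB : 'I_d -> 'cV[C]_d) (rho : 'M[C]_(d * d)) :
  Defs.orthonormal sA -> Defs.orthonormal sB ->
  let G := Smx sA *t Smx sB in
  let P := V0 C d *t V0 C d in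
  negAB sA sB rho = (trnorm (ptrans_24 (P *m (adjmx G *m rho *m G) *m adjmx P)) - 1) / 2.
Proof.
move=> hsA hsB G P.
have hA : adjmx (Smx sA) *m Smx sA = 1%:M by apply: Smx_unitary.
have hB : adjmx (Smx sB) *m Smx sB = 1%:M by apply: Smx_unitary.
set F := (Smx sA *t (1%:M : 'M_d)) *t (Smx sB *t (1%:M : 'M_d)).
have hW : measV sA *t measV sB = F *m P *m adjmx G.
  by rewrite !measV_decomp tens_mul3 /G adjmx_tens.
rewrite /negAB hW !adjmx_mul adjmxK.
have -> : F *m P *m adjmx G *m rho *m (G *m (adjmx P *m adjmx F)) =
  F *m (P *m (adjmx G *m rho *m G) *m adjmx P) *m adjmx F.
  by rewrite !mulmxA.
by rewrite ptrans_24_local trnorm_unitary // unitary_F2.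
Qed.

End Reduce.


Section Zform.
Variable C : numClosedFieldType.
Variable d : nat.

Definition cst : C := (sqrtC (d%:R))^-1.

Lemma idx0 : (0 : 'I_(1 * 1)) = ix2 (0 : 'I_1) (0 : 'I_1).
Proof. by apply: val_inj. Qed.

Lemma Z_form (G : 'M[C]_(d * d)) (al be : C) : adjmx G *m G = 1%:M ->
  adjmx G *m (al *: Phi C d + be *: 1%:M) *m G =
  al *: ((adjmx G *m max_ent C d) *m adjmx (adjmx G *m max_ent C d)) + be *: 1%:M.
Proof.
move=> hG.
have e : adjmx G *m Phi C d *m G =
  (adjmx G *m max_ent C d) *m adjmx (adjmx G *m max_ent C d).
  by rewrite /Phi adjmx_mul adjmxK !mulmxA.
rewrite mulmxDr mulmxDl -e -!scalemxAr -!scalemxAl.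
by rewrite mul_mx_scalar -scalemxAl scale1r hG.
Qed.

Lemma ZE (psi : 'M[C]_(d * d, 1 * 1)) (al be : C) x y :
  (al *: (psi *m adjmx psi) + be *: 1%:M) x y =
  al * (psi x 0 * (psi y 0)^*) + be * (x == y)%:R.
Proof.
rewrite !mxE (bigD1 0) //= big1 ?addr0 //.
  by rewrite adjmxE.
by move=> z; have -> : z = 0 by apply: val_inj; case: z => [[]].
Qed.

Lemma psiE (A B : 'M[C]_d) k m :
  (adjmx (A *t B) *m max_ent C d) (ix2 k m) 0 =
  cst * \sum_i ((A i k)^* * (B i m)^*).
Proof.
rewrite /max_ent -scalemxAr mxE mulmx_sumr summxE; congr (_ * _).
apply: eq_bigr=> i _; rewrite adjmx_tens tensmx_mul idx0 tensmxE.
by rewrite !mul_ket !adjmxE.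
Qed.

Lemma max_entE k m : max_ent C d (ix2 k m) 0 = cst * (k == m)%:R.
Proof.
rewrite /max_ent mxE summxE; congr (_ * _).
rewrite (bigD1 k) //= big1 ?addr0.
  by rewrite idx0 tensmxE !ketE eqxx mul1r eq_sym.
by move=> i ne; rewrite idx0 tensmxE !ketE eq_sym (negbTE ne) mul0r.
Qed.

Lemma psi_one (S : 'M[C]_d) : adjmx S *m S = 1%:M ->
  adjmx (S *t map_mx Num.conj S) *m max_ent C d = max_ent C d.
Proof.
move=> hS; apply/matrixP=> x z.
have -> : z = 0 by apply: val_inj; case: z => [[]].
case: (mxtens_indexP x)=> k m; rewrite psiE max_entE; congr (_ * _).
have /matrixP/(_ k m) := hS; rewrite !mxE => <-.
by apply: eq_bigr=> i _; rewrite !mxE conjCK.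
Qed.

End Zform.


Section Sparse.
Variable C : numClosedFieldType.

Lemma trnorm_sigma n (M : 'M[C]_n) (sg : 'I_n -> 'I_n) : involutive sg ->
  (forall i j, j != sg i -> M i j = 0) -> trnorm M = \sum_i \sum_j `|M i j|.
Proof.
move=> hsg hM; rewrite trnorm_sparse.
- exact: exchange_big.
- move=> i j k ne; case: (eqVneq j (sg i)) => [ej|nj]; last by rewrite hM // mul0r.
  by rewrite (hM i k) ?mulr0 // -ej eq_sym.
- move=> j i k ne; case: (eqVneq j (sg i)) => [ej|nj]; last by rewrite hM // mul0r.
case: (eqVneq j (sg k)) => [ek|nk]; last by rewrite (hM k j) // mulr0.
by move: ne; rewrite -(hsg i) -ej ek hsg eqxx.
Qed.

Lemma sum_norm0 n (f : 'I_n -> C) : (forall i, f i = 0) -> \sum_i `|f i| = 0.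
Proof. by move=> h; rewrite big1 // => i _; rewrite h normr0. Qed.

End Sparse.

Section OneSided.
Variable C : numClosedFieldType.
Variable d : nat.

Definition sig1 (a b m : 'I_d) : 'I_(d * d * d) :=
  if a == m then ix2 (ix2 b a) b else ix2 (ix2 a b) m.

Definition sigma1 (x : 'I_(d * d * d)) : 'I_(d * d * d) :=
  let: (p, m) := mxtens_unindex x in let: (a, b) := mxtens_unindex p in sig1 a b m.

Lemma sigma1E a b m : sigma1 (ix2 (ix2 a b) m) = sig1 a b m.
Proof. by rewrite /sigma1 !mxtens_indexK. Qed.

Lemma sigma1_inv : involutive sigma1.
Proof.
move=> x; case: (mxtens_indexP x)=> p m; case: (mxtens_indexP p)=> a b.
rewrite sigma1E /sig1; case: (eqVneq a m) => [<-|ne].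
  by rewrite sigma1E /sig1 eqxx.
by rewrite sigma1E /sig1 (negbTE ne).
Qed.

Variables (Z : 'M[C]_(d * d)) (u be : C).
Hypothesis hZ : forall a m a' m', Z (ix2 a m) (ix2 a' m') =
  u * ((a == m)%:R * (a' == m')%:R) + be * ((a == a')%:R * (m == m')%:R).

Let P := V0 C d *t (1%:M : 'M_d).
Let M := ptrans_mid (P *m Z *m adjmx P).

Lemma ME a b m a' b' m' :
  M (ix2 (ix2 a b) m) (ix2 (ix2 a' b') m') =
  (a == b')%:R * (a' == b)%:R * Z (ix2 a m) (ix2 a' m').
Proof. by rewrite /M ptrans_midE Y1E. Qed.

Lemma M_sparse i j : j != sigma1 i -> M i j = 0.
Proof.
case: (mxtens_indexP i)=> p m; case: (mxtens_indexP p)=> a b.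
case: (mxtens_indexP j)=> q m'; case: (mxtens_indexP q)=> a' b'.
rewrite sigma1E ME /sig1.
case: (eqVneq a b') => [<-|]; last by rewrite mul0r mul0r.
case: (eqVneq a' b) => [<-|]; last by rewrite mulr0 mul0r.
rewrite !mul1r hZ.
case: (eqVneq a m) => [<-|nam] ne.
  case: (eqVneq a' m') => [eam|nam']; first by move: ne; rewrite eam eqxx.
  rewrite mulr0 mulr0 add0r.
  case: (eqVneq a a') => [eaa|]; last by rewrite mul0r mulr0.
  case: (eqVneq a m') => [eam'|]; last by rewrite mulr0 mulr0.
  by move: nam'; rewrite -eaa eam' eqxx.
rewrite mul0r mulr0 add0r.
case: (eqVneq a a') => [eaa|]; last by rewrite mul0r mulr0.
case: (eqVneq m m') => [emm|]; last by rewrite mulr0 mulr0.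
by move: ne; rewrite -eaa -emm eqxx.
Qed.

Lemma M_rowsum a b m :
  \sum_y `|M (ix2 (ix2 a b) m) y| = \sum_m' `|Z (ix2 a m) (ix2 b m')|.
Proof.
rewrite sum_tens sum_tens.
rewrite (bigD1 b) //= [X in _ + X]big1 ?addr0; last first.
  move=> a' ne; rewrite big1 // => b' _; apply: sum_norm0 => m'.
  by rewrite ME eq_sym (negbTE ne) mulr0 mul0r.
rewrite (bigD1 a) //= [X in _ + X]big1 ?addr0; last first.
  move=> b' ne; apply: sum_norm0 => m'.
  by rewrite ME eq_sym (negbTE ne) !mul0r.
by apply: eq_bigr=> m' _; rewrite ME !eqxx !mul1r.
Qed.

Lemma trnorm_M : trnorm M = \sum_x \sum_y `|Z x y|.
Proof.
rewrite (trnorm_sigma sigma1_inv M_sparse).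
rewrite sum_tens sum_tens [RHS]sum_tens; apply: eq_bigr=> a _.
under eq_bigr do under eq_bigr do rewrite M_rowsum.
rewrite exchange_big /=; apply: eq_bigr=> m _.
by rewrite sum_tens.
Qed.

End OneSided.

Section TwoSided.
Variable C : numClosedFieldType.
Variable d : nat.

Definition sigma2 (x : 'I_(d * d * (d * d))) : 'I_(d * d * (d * d)) :=
  let: (p, q) := mxtens_unindex x in let: (a, b) := mxtens_unindex p in
  let: (m, n) := mxtens_unindex q in ix2 (ix2 b a) (ix2 n m).

Lemma sigma2E a b m n : sigma2 (ix2 (ix2 a b) (ix2 m n)) = ix2 (ix2 b a) (ix2 n m).
Proof. by rewrite /sigma2 !mxtens_indexK. Qed.

Lemma sigma2_inv : involutive sigma2.
Proof.
move=> x; case: (mxtens_indexP x)=> p q; case: (mxtens_indexP p)=> a b.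
by case: (mxtens_indexP q)=> m n; rewrite !sigma2E.
Qed.

Variable Z : 'M[C]_(d * d).

Let P := V0 C d *t V0 C d.
Let M := ptrans_24 (P *m Z *m adjmx P).

Lemma M2E a b m n a' b' m' n' :
  M (ix2 (ix2 a b) (ix2 m n)) (ix2 (ix2 a' b') (ix2 m' n')) =
  (a == b')%:R * (m == n')%:R * ((a' == b)%:R * (m' == n)%:R) * Z (ix2 a m) (ix2 a' m').
Proof. by rewrite /M ptrans_24E Y2E. Qed.

Lemma M2_sparse i j : j != sigma2 i -> M i j = 0.
Proof.
case: (mxtens_indexP i)=> p q; case: (mxtens_indexP p)=> a b.
case: (mxtens_indexP q)=> m n.
case: (mxtens_indexP j)=> p' q'; case: (mxtens_indexP p')=> a' b'.
case: (mxtens_indexP q')=> m' n'.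
rewrite sigma2E M2E.
case: (eqVneq a b') => [<-|]; last by rewrite !mul0r.
case: (eqVneq a' b) => [<-|]; last by rewrite mul0r mulr0 mul0r.
case: (eqVneq m n') => [<-|]; last by rewrite mulr0 !mul0r.
case: (eqVneq m' n) => [<-|]; last by rewrite !(mulr0, mul0r).
by rewrite eqxx.
Qed.

Lemma M2_rowsum a b m n :
  \sum_y `|M (ix2 (ix2 a b) (ix2 m n)) y| = `|Z (ix2 a m) (ix2 b n)|.
Proof.
rewrite sum_tens sum_tens.
rewrite (bigD1 b) //= [X in _ + X]big1 ?addr0; last first.
  move=> a' ne; rewrite big1 // => b' _; apply: sum_norm0 => q.
  case: (mxtens_indexP q)=> m' n'.
  by rewrite M2E eq_sym (negbTE ne) !(mulr0, mul0r).
rewrite (bigD1 a) //= [X in _ + X]big1 ?addr0; last first.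
  move=> b' ne; apply: sum_norm0 => q; case: (mxtens_indexP q)=> m' n'.
  by rewrite M2E eq_sym (negbTE ne) !mul0r.
rewrite sum_tens (bigD1 n) //= [X in _ + X]big1 ?addr0; last first.
  move=> m' ne; apply: sum_norm0 => n'.
  by rewrite M2E eq_sym (negbTE ne) !(mulr0, mul0r).
rewrite (bigD1 m) //= [X in _ + X]big1 ?addr0; last first.
  move=> n' ne; rewrite M2E eq_sym (negbTE ne) !(mulr0, mul0r).
  by rewrite normr0.
by rewrite M2E !eqxx !mul1r.
Qed.

Lemma trnorm_M2 : trnorm M = \sum_x \sum_y `|Z x y|.
Proof.
rewrite (trnorm_sigma sigma2_inv M2_sparse).
rewrite sum_tens sum_tens [RHS]sum_tens; apply: eq_bigr=> a _.
under eq_bigr do rewrite sum_tens.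
under eq_bigr do under eq_bigr do under eq_bigr do rewrite M2_rowsum.
rewrite exchange_big /=; apply: eq_bigr=> m _.
by rewrite sum_tens.
Qed.

End TwoSided.


Section Scalar.
Variable C : numClosedFieldType.

Lemma sumZ N (psi : 'I_N -> C) (al be : C) :
  (forall x, 0 <= al * `|psi x| ^+ 2 + be) ->
  \sum_x \sum_y `|al * (psi x * (psi y)^*) + be * (x == y)%:R| =
  al * \sum_x `|psi x| ^+ 2 + N%:R * be +
  `|al| * ((\sum_x `|psi x|) ^+ 2 - \sum_x `|psi x| ^+ 2).
Proof.
move=> h.
set S := \sum_x `|psi x|.
have row x : \sum_y `|al * (psi x * (psi y)^*) + be * (x == y)%:R| =
   al * `|psi x| ^+ 2 + be + `|al| * (`|psi x| * S - `|psi x| ^+ 2).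
  rewrite (bigD1 x) //= eqxx mulr1 -normCK ger0_norm //; congr (_ + _).
  transitivity (`|al| * (`|psi x| * \sum_(y | y != x) `|psi y|)).
    rewrite !mulr_sumr; apply: eq_bigr=> y ne.
    by rewrite eq_sym (negbTE ne) mulr0 addr0 !normrM norm_conjC mulrA.
  rewrite /S [in RHS](bigD1 x) //=; ring.
under eq_bigr do rewrite row.
rewrite big_split big_split /= -mulr_sumr sumr_const card_ord -[be *+ N]mulr_natl.
rewrite -mulr_sumr sumrB -mulr_suml expr2 /S; ring.
Qed.

Lemma nonneg_aff (al be t : C) : al \is Num.real -> 0 <= be -> 0 <= al + be ->
  0 <= t -> t <= 1 -> 0 <= al * t + be.
Proof.
move=> ral hbe hab ht0 ht1.
case/orP: (real_leVge ral (real0 C)) => hal.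
  apply: le_trans hab _; rewrite lerD2r.
  by rewrite -[X in X <= _]mulr1 ler_wnM2l.
by apply: addr_ge0 => //; apply: mulr_ge0.
Qed.

Lemma term_le_sum n (f : 'I_n -> C) i : (forall j, 0 <= f j) -> f i <= \sum_j f j.
Proof.
move=> h; rewrite (bigD1 i) //= lerDl; exact: sumr_ge0.
Qed.

End Scalar.


Section Final.
Variable C : numClosedFieldType.
Variable d : nat.
Hypothesis d_gt0 : (0 < d)%N.

Lemma neg_from_psi (psi : 'I_(d * d) -> C) (al be : C) :
  \sum_x `|psi x| ^+ 2 = 1 -> al \is Num.real -> 0 <= be -> 0 <= al + be ->
  al + (d * d)%:R * be = 1 ->
  (\sum_x \sum_y `|al * (psi x * (psi y)^*) + be * (x == y)%:R| - 1) / 2 =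
  `|al| * ((\sum_x `|psi x|) ^+ 2 - 1) / 2.
Proof.
move=> h1 ral hbe hab hN.
rewrite sumZ ?h1 ?mulr1 ?hN; first by rewrite addrAC subrr add0r.
move=> x; apply: nonneg_aff => //; first exact: exprn_ge0.
rewrite -h1; apply: (@term_le_sum _ _ (fun y => `|psi y| ^+ 2) x) => y.
exact: exprn_ge0.
Qed.

Lemma cst_ge0 : 0 <= cst C d.
Proof. by rewrite /cst invr_ge0 sqrtC_ge0 ler0n. Qed.

Lemma cst_sqr : cst C d ^+ 2 = d%:R^-1.
Proof. by rewrite /cst exprVn sqrtCK. Qed.

Lemma dR_neq0 : (d%:R : C) != 0.
Proof. by rewrite pnatr_eq0 -lt0n. Qed.

Lemma max_ent_sums :
  \sum_x `|max_ent C d x 0| ^+ 2 = 1 /\ \sum_x `|max_ent C d x 0| = d%:R * cst C d.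
Proof.
have row a : \sum_m `|max_ent C d (ix2 a m) 0| = cst C d.
  rewrite (bigD1 a) //= big1 ?addr0.
    by rewrite max_entE eqxx mulr1 ger0_norm // cst_ge0.
  by move=> m ne; rewrite max_entE eq_sym (negbTE ne) mulr0 normr0.
have row2 a : \sum_m `|max_ent C d (ix2 a m) 0| ^+ 2 = cst C d ^+ 2.
  rewrite (bigD1 a) //= big1 ?addr0.
    by rewrite max_entE eqxx mulr1 ger0_norm // cst_ge0.
  by move=> m ne; rewrite max_entE eq_sym (negbTE ne) mulr0 normr0 expr0n.
split.
  rewrite sum_tens; under eq_bigr do rewrite row2.
  by rewrite sumr_const card_ord cst_sqr -[_ *+ d]mulr_natl mulfV // dR_neq0.
rewrite sum_tens; under eq_bigr do rewrite row.
by rewrite sumr_const card_ord -[_ *+ d]mulr_natl.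
Qed.

Lemma ixE (a m a' m' : 'I_d) :
  ((ix2 a m == ix2 a' m')%:R : C) = (a == a')%:R * (m == m')%:R.
Proof.
by rewrite (inj_eq (can_inj (@mxtens_indexK d d))) xpair_eqE -natrM mulnb.
Qed.

Lemma negA_iso (s : 'I_d -> 'cV[C]_d) (al be : C) :
  Defs.orthonormal s -> al \is Num.real -> 0 <= be -> 0 <= al + be ->
  al + (d * d)%:R * be = 1 ->
  negA s (al *: Phi C d + be *: 1%:M) = `|al| * (d%:R - 1) / 2.
Proof.
move=> hs ral hbe hab hN.
rewrite negA_reduce //.
set S := Smx s.
have hS : adjmx S *m S = 1%:M by apply: Smx_unitary.
rewrite Z_form; last by apply: unitary_tens => //; apply: conj_unitary.
rewrite psi_one //.
set Z := al *: _ + _.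
have hZ : forall a m a' m', Z (ix2 a m) (ix2 a' m') =
   (al * cst C d * cst C d) * ((a == m)%:R * (a' == m')%:R) +
   be * ((a == a')%:R * (m == m')%:R).
  move=> a m a' m'; rewrite /Z ZE !max_entE ixE geC0_conj; first ring.
  by rewrite mulr_ge0 ?cst_ge0 ?ler0n.
rewrite (trnorm_M hZ).
under eq_bigr do under eq_bigr do rewrite /Z ZE.
rewrite neg_from_psi //; last by case: max_ent_sums.
case: max_ent_sums => _ ->.
congr (_ * _ / _); rewrite exprMn cst_sqr expr2 -mulrA mulfV ?mulr1 //.
exact: dR_neq0.
Qed.

End Final.


Section Two.
Variable C : numClosedFieldType.
Variable d : nat.
Hypothesis d_gt0 : (0 < d)%N.

Lemma ket_orthonormal : Defs.orthonormal (@ket C d).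
Proof.
move=> j k; apply/matrixP=> x y; rewrite !mxE.
have -> : x = 0 by apply: ord1.
have -> : y = 0 by apply: ord1.
rewrite eqxx mulr1n (bigD1 j) //= big1 ?addr0.
  rewrite !mxE !eqxx !andbT rmorph1 mul1r.
  done.
by move=> i ne; rewrite !mxE (negbTE ne) /= rmorph0 mul0r.
Qed.

Lemma Smx_ket1 : Smx (@ket C d) = 1%:M.
Proof. by apply/matrixP=> i k; rewrite !mxE andbT. Qed.

Lemma adjket_ket (k : 'I_d) : (adjmx (ket C k) *m ket C k) 0 0 = 1.
Proof.
rewrite mxE (bigD1 k) //= big1 ?addr0.
  by rewrite adjmxE ketE eqxx rmorph1 mul1r.
by move=> i ne; rewrite adjmxE ketE (negbTE ne) rmorph0 mul0r.
Qed.

Lemma rowsum1 (A B : 'M[C]_d) k : adjmx A *m A = 1%:M -> adjmx B *m B = 1%:M ->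
  \sum_m `|\sum_i ((A i k)^* * (B i m)^*)| ^+ 2 = 1.
Proof.
move=> hA hB.
set w := adjmx B *m map_mx Num.conj A *m ket C k.
have hw m : w m 0 = \sum_i ((A i k)^* * (B i m)^*).
  rewrite /w mul_ket mxE; apply: eq_bigr=> i _; rewrite !mxE mulrC.
  done.
transitivity ((adjmx w *m w) 0 0).
  rewrite [RHS]mxE; apply: eq_bigr=> m _.
  by rewrite adjmxE hw normCK mulrC.
have hB' := mulmx1C hB.
have -> : adjmx w *m w = adjmx (ket C k) *m ket C k.
  rewrite /w !adjmx_mul adjmxK !mulmxA.
  rewrite -[_ *m B *m adjmx B]mulmxA hB' mulmx1.
  by rewrite -[adjmx (ket C k) *m _ *m _]mulmxA conj_unitary // mulmx1.
exact: adjket_ket.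
Qed.

Definition psi2 (A B : 'M[C]_d) (x : 'I_(d * d)) :=
  (adjmx (A *t B) *m max_ent C d) x 0.

Lemma psi2_rowsum (A B : 'M[C]_d) k : adjmx A *m A = 1%:M -> adjmx B *m B = 1%:M ->
  \sum_m `|psi2 A B (ix2 k m)| ^+ 2 = d%:R^-1.
Proof.
move=> hA hB; rewrite /psi2.
under eq_bigr do rewrite psiE normrM exprMn ger0_norm ?cst_ge0 // cst_sqr.
by rewrite -mulr_sumr rowsum1 // mulr1.
Qed.

Lemma psi2_sum2 (A B : 'M[C]_d) : adjmx A *m A = 1%:M -> adjmx B *m B = 1%:M ->
  \sum_x `|psi2 A B x| ^+ 2 = 1.
Proof.
move=> hA hB; rewrite sum_tens.
under eq_bigr do rewrite psi2_rowsum //.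
by rewrite sumr_const card_ord -[_ *+ d]mulr_natl mulfV // dR_neq0.
Qed.

Lemma psi2_sum_ge (A B : 'M[C]_d) : adjmx A *m A = 1%:M -> adjmx B *m B = 1%:M ->
  d%:R <= (\sum_x `|psi2 A B x|) ^+ 2.
Proof.
move=> hA hB.
set t := sqrtC (d%:R : C).
have t0 : 0 <= t by rewrite sqrtC_ge0 ler0n.
have hx x : t * `|psi2 A B x| ^+ 2 <= `|psi2 A B x|.
  case: (mxtens_indexP x) => k m.
  have le1 : `|psi2 A B (ix2 k m)| ^+ 2 <= d%:R^-1.
    rewrite -(psi2_rowsum k hA hB).
    by apply: (@term_le_sum _ _ (fun m => `|psi2 A B (ix2 k m)| ^+ 2) m) => y; exact: exprn_ge0.
  have le2 : t * `|psi2 A B (ix2 k m)| <= 1.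
    rewrite -(expr_le1 (n := 2)) //; last by rewrite mulr_ge0.
    rewrite exprMn sqrtCK -[X in _ <= X](mulfV (dR_neq0 C d_gt0)).
    by apply: ler_wpM2l => //; rewrite ler0n.
  rewrite expr2 mulrA -[X in _ <= X]mul1r.
  by apply: ler_wpM2r.
have hs : t <= \sum_x `|psi2 A B x|.
  rewrite -[X in X <= _]mulr1 -(psi2_sum2 hA hB) mulr_sumr.
  by apply: ler_sum => x _.
rewrite -[X in X <= _](sqrtCK (d%:R : C)) -/t.
apply: lerXn2r => //; rewrite ?inE //.
exact: (le_trans t0 hs).
Qed.

Lemma negAB_iso (sA sB : 'I_d -> 'cV[C]_d) (al be : C) :
  Defs.orthonormal sA -> Defs.orthonormal sB -> al \is Num.real -> 0 <= be -> 0 <= al + be ->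
  al + (d * d)%:R * be = 1 ->
  negAB sA sB (al *: Phi C d + be *: 1%:M) =
  `|al| * ((\sum_x `|psi2 (Smx sA) (Smx sB) x|) ^+ 2 - 1) / 2.
Proof.
move=> hsA hsB ral hbe hab hN.
have hA : adjmx (Smx sA) *m Smx sA = 1%:M by apply: Smx_unitary.
have hB : adjmx (Smx sB) *m Smx sB = 1%:M by apply: Smx_unitary.
rewrite negAB_reduce // Z_form; last exact: unitary_tens.
rewrite (trnorm_M2 (d := d)).
under eq_bigr do under eq_bigr do rewrite ZE.
by rewrite (neg_from_psi (psi := psi2 (Smx sA) (Smx sB))) // psi2_sum2.
Qed.

End Two.



Lemma normC_real (R : realType) (x : R) : `|(x%:C)%C| = ((`|x|)%:C)%C.
Proof.
by rewrite normc_def /= expr0n /= addr0 sqrtr_sqr.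
Qed.


Unset Implicit Arguments.
Set Strict Implicit.

Theorem theorem14 (R : realType) (d : nat) (lam : R) :
  (2 <= d)%N -> 0 <= lam <= 1 ->
  let rho := isotropic d (lam%:C)%C in
  let q := ((`|lam * (d ^ 2)%:R - 1| / (2 * (d + 1)%:R))%:C)%C in
  is_QA rho q /\ is_QAB rho q.
Proof.
move=> d2 /andP[l0 l1] rho q.
have d0 : (0 < d)%N by apply: leq_trans d2.
set lC : R[i] := (lam%:C)%C.
have lC0 : 0 <= lC by rewrite /lC ler0c.
have lC1 : lC <= 1 by rewrite /lC -(rmorph1 (real_complex R)) lecR.
have rlC : lC \is Num.real by apply: ger0_real.
set kR : R[i] := ((d ^ 2 - 1)%N)%:R.
have hd2 : (1 <= d ^ 2)%N by rewrite expn_gt0 d0.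
have kRE : kR = d%:R ^+ 2 - 1 by rewrite /kR natrB // natrX.
have kR0 : 0 < kR.
  rewrite /kR ltr0n subn_gt0.
  by apply: (@leq_trans (2 ^ 2)) => //; rewrite leq_exp2r.
set be : R[i] := (1 - lC) / kR.
set al : R[i] := lC - be.
have hbe : 0 <= be by rewrite /be divr_ge0 ?subr_ge0 // ltW.
have hab : 0 <= al + be by rewrite /al subrK.
have ral : al \is Num.real.
  by rewrite /al rpredB // ger0_real.
have hN : al + (d * d)%:R * be = 1.
  rewrite /al /be natrM -expr2.
  have : d%:R ^+ 2 = kR + 1 :> R[i] by rewrite kRE subrK.
  move=> ->; field; exact: lt0r_neq0.
have hiso : rho = al *: Phi R[i] d + be *: 1%:M.
  rewrite /rho /isotropic -/lC -/kR -/be /al scalerBr scalerBl.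
  by rewrite addrCA addrC.
have hq : `|al| * (d%:R - 1) / 2 = q.
  have alE : al = (lC * d%:R ^+ 2 - 1) / kR.
    have -> : lC * d%:R ^+ 2 - 1 = lC * kR - (1 - lC) by rewrite kRE; ring.
    by rewrite mulrBl mulfK // lt0r_neq0.
  have nE : `|lC * d%:R ^+ 2 - 1| = ((`|lam * (d ^ 2)%:R - 1|)%:C)%C.
    rewrite -normC_real rmorphB rmorphM rmorph1.
    by rewrite (rmorph_nat (real_complex R)) natrX.
  rewrite /q alE normf_div nE (ger0_norm (ltW kR0)).
  rewrite (rmorphM (real_complex R)) (fmorphV (real_complex R)) (rmorphM (real_complex R)).
  rewrite !(rmorph_nat (real_complex R)) kRE.
  have h1 : (d%:R : R[i]) - 1 != 0.
    change ((d%:R : R[i]) - 1%:R != 0).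
    by rewrite -natrB ?pnatr_eq0 ?subn_eq0 -?ltnNge // ltnW.
  have h2 : (d%:R : R[i]) + 1 != 0.
    change ((d%:R : R[i]) + 1%:R != 0).
    by rewrite -natrD pnatr_eq0 addn1.
  rewrite natrD.
  field.
  by rewrite h2 -kRE lt0r_neq0.
have ko := ket_orthonormal (R[i]) (d:=d).
have psi1 x : psi2 (Smx (@ket (R[i]) d)) (Smx (@ket (R[i]) d)) x = max_ent R[i] d x 0.
  by rewrite /psi2 Smx_ket1 tens1 adjmx1 mul1mx.
have eA s : Defs.orthonormal s -> negA s rho = q.
  by move=> hs; rewrite hiso (negA_iso d0 hs ral hbe hab hN) hq.
have eB sA sB : Defs.orthonormal sA -> Defs.orthonormal sB ->
  negAB sA sB rho = `|al| * ((\sum_x `|psi2 (Smx sA) (Smx sB) x|) ^+ 2 - 1) / 2.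
  by move=> hA hB; rewrite hiso (negAB_iso d0 hA hB ral hbe hab hN).
split; split.
- exists (@ket (R[i]) d); first exact: ko.
  exact: eA.
- move=> s hs; rewrite (eA s hs); exact: lexx.
- exists (@ket (R[i]) d, @ket (R[i]) d); first by split; exact: ko.
  rewrite /= (eB _ _ ko ko).
  under eq_bigr do rewrite psi1.
  case: (max_ent_sums R[i] d0) => _ ->.
  rewrite exprMn cst_sqr -hq; congr (_ * (_ - _) / _).
  by rewrite expr2 -mulrA mulfV ?mulr1 // dR_neq0.
- move=> [sA sB] [hA hB]; rewrite /= (eB _ _ hA hB) -hq.
  apply: ler_wpM2r; first by rewrite invr_ge0 ler0n.
  apply: ler_wpM2l; first exact: normr_ge0.
  rewrite lerD2r; apply: psi2_sum_ge => //; exact: Smx_unitary.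
Qed.
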